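(* Fix $p\in[0,1]$, and let $C=\{(i,j)\in\mathcal{L}:i\in\{0,1\},\ j<0\}$. Let $A\supset B$ be infinite subsets of $C$. Then for every $n\ge0$, $$\mathbb{E}_p\big[u^n_{B\cup\{o\}}-u^n_B\big]\ge\mathbb{E}_p\big[u^n_{A\cup\{o\}}-u^n_A\big]\ge 2p.$$
   Context: Let $\mathcal{L}=\{(n,m)\in\mathbb{Z}^2:n\ge0,\ n+m\text{ even}\}$. Under $\mathbb{P}_p$, each site of $\mathcal{L}$ is independently open with probability $p$ and closed otherwise. For $z,z'\in\mathcal{L}$ write $z\to z'$ if there exist $k\ge0$ and sites $z=z_0,\dots,z_k=z'$ of $\mathcal{L}$ such that $z_0,\dots,z_{k-1}$ are open and $z_{i+1}-z_i\in\{(1,1),(2,0),(1,-1)\}$ for every $i$. Let $o=(0,0)$. For a set $A\subset\mathcal{L}$, let $\xi^n_A=\{x:z\to(n,x)\text{ for some }z\in A\}$ and $u^n_A=\sup\xi^n_A$, with $\sup\emptyset=-\infty$. *)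

(* Defs.v *)
From HB Require Import structures.
From mathcomp Require Import all_boot all_order all_algebra.
From mathcomp Require Import all_classical all_reals all_analysis.
Set Implicit Arguments. Unset Strict Implicit. Unset Printing Implicit Defensive.
Import Order.TTheory GRing.Theory Num.Theory.
Local Open Scope classical_set_scope.
Local Open Scope ring_scope.

Definition site := (int * int)%type.

Definition inL (z : site) : Prop := (0 <= z.1) /\ (2 %| z.1 + z.2)%Z.

Definition o : site := (0, 0).

Definition step (a b : site) : Prop :=
  (b.1 = a.1 + 1 /\ b.2 = a.2 + 1) \/
  (b.1 = a.1 + 2 /\ b.2 = a.2) \/
  (b.1 = a.1 + 1 /\ b.2 = a.2 - 1).

(* z -> z' for the configuration w (w z = true means z is open) *)
Definition reach (w : site -> bool) (z z' : site) : Prop :=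
  exists (k : nat) (f : nat -> site),
    [/\ f 0%N = z, f k = z',
        (forall i, (i <= k)%N -> inL (f i)) &
        (forall i, (i < k)%N -> w (f i) /\ step (f i) (f i.+1))].

Definition xi (w : site -> bool) (n : nat) (A : set site) : set int :=
  [set x | exists2 z, A z & reach w z (n%:Z, x)].

(* u^n_A = sup xi^n_A, with sup of the empty set = -oo *)
Definition u {R : realType} (w : site -> bool) (n : nat) (A : set site) : \bar R :=
  ereal_sup [set (x%:~R)%:E | x in xi w n A].

(* Difference a - b of extended reals, with the convention (-oo) - (-oo) = 0
   (mathcomp's default would give -oo). Otherwise it is the usual a - b. *)
Definition ediff {R : realType} (a b : \bar R) : \bar R :=
  if (a == -oo)%E && (b == -oo)%E then 0%E else (a - b)%E.

Definition Cset : set site :=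
  [set z | inL z /\ (z.1 = 0 \/ z.1 = 1) /\ z.2 < 0].

Definition bernoulli_field {R : realType} {d : measure_display}
  {T : measurableType d} (P : probability T R) (p : R) (w : T -> site -> bool) : Prop :=
  (forall z, inL z -> measurable [set t | w t z]) /\
  (forall z, inL z -> P [set t | w t z] = p%:E) /\
  (forall s : seq site, uniq s -> all (fun z => `[< inL z >]) s ->
     P (\big[setI/setT]_(z <- s) [set t | w t z]) = (p ^+ size s)%:E).

(* Main.v *)
Require Import Defs.
From HB Require Import structures.
From mathcomp Require Import all_boot all_order all_algebra.
From mathcomp Require Import all_classical all_reals all_analysis.
From mathcomp Require Import zify ring lra.
Import Order.TTheory GRing.Theory Num.Theory.
Local Open Scope classical_set_scope.
Local Open Scope ring_scope.
Set Implicit Arguments. Unset Strict Implicit.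

Lemma step_bound (a b : site) : step a b ->
  a.1 + 1 <= b.1 /\ b.1 <= a.1 + 2 /\ b.2 - a.2 <= b.1 - a.1 /\ a.2 - b.2 <= b.1 - a.1.
Proof. case=> [[-> ->]|[[-> ->]|[-> ->]]]; lia. Qed.

Lemma path_bound (f : nat -> site) k :
  (forall i, (i < k)%N -> step (f i) (f i.+1)) ->
  forall i j, (i <= j <= k)%N ->
  (f i).1 + (j%:Z - i%:Z) <= (f j).1 /\ (f j).2 - (f i).2 <= (f j).1 - (f i).1
  /\ (f i).2 - (f j).2 <= (f j).1 - (f i).1.
Proof.
move=> hs i; elim=> [|j IH] /andP [hij hjk].
  have -> : i = 0%N by lia.
  lia.
case: (ltngtP i j.+1) => [hlt|hgt|->]; last by lia.
  have := IH (ltac:(apply/andP; split; lia)).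
  have := step_bound (hs j (ltac:(lia))).
  lia.
lia.
Qed.

Lemma reach_bound (w : site -> bool) z z' : reach w z z' ->
  z.1 <= z'.1 /\ z'.2 - z.2 <= z'.1 - z.1 /\ z.2 - z'.2 <= z'.1 - z.1.
Proof.
case=> k [f [h0 hk hL hs]].
have hs' : forall i, (i < k)%N -> step (f i) (f i.+1) by move=> i /hs [].
have := path_bound hs' (i:=0) (j:=k) (ltac:(apply/andP; split; lia)).
rewrite h0 hk. lia.
Qed.

Lemma reach_inL w z z' : reach w z z' -> inL z /\ inL z'.
Proof.
case=> k [f [h0 hk hL hs]]; split.
  by rewrite -h0; apply: hL.
by rewrite -hk; apply: hL.
Qed.

Lemma reach_window (w : site -> bool) z (n : nat) (x : int) : reach w z (n%:Z, x) ->
  exists k (f : nat -> site),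
   [/\ f 0%N = z, f k = (n%:Z, x),
       (forall i, (i <= k)%N -> inL (f i)),
       (forall i, (i < k)%N -> w (f i) /\ step (f i) (f i.+1)) &
       (forall i, (i < k)%N -> 0 <= (f i).1 /\ (f i).1 + 1 <= n%:Z /\
          x - n%:Z <= (f i).2 /\ (f i).2 <= z.2 + n%:Z /\ (i != 0%N -> (f i).1 >= 1))].
Proof.
case=> k [f [h0 hk hL hs]].
exists k, f; split=> // i hi.
have hs' : forall i, (i < k)%N -> step (f i) (f i.+1) by move=> j /hs [].
have [h1 _] := hL i (ltnW hi).
have := path_bound hs' (i:=i) (j:=k) (ltac:(apply/andP; split; lia)).
have := path_bound hs' (i:=0) (j:=i) (ltac:(apply/andP; split; lia)).
have [hz _] := hL 0%N (ltac:(lia)).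
rewrite hk h0 /=. rewrite h0 in hz. lia.
Qed.

Lemma reach_dep (w w' : site -> bool) z z' (Q : site -> Prop) :
  (forall k (f : nat -> site), f 0%N = z -> f k = z' ->
     (forall i, (i <= k)%N -> inL (f i)) ->
     (forall i, (i < k)%N -> w (f i) /\ step (f i) (f i.+1)) ->
     forall i, (i < k)%N -> Q (f i)) ->
  (forall s, Q s -> w s = w' s) -> reach w z z' -> reach w' z z'.
Proof.
move=> hQ hw [k [f [h0 hk hL hs]]]; exists k, f; split=> // i hi.
rewrite -hw; first exact: hs.
exact: hQ hi.
Qed.

Lemma reach_refl (w : site -> bool) z : inL z -> reach w z z.
Proof. by move=> hz; exists 0%N, (fun _ => z); split=> // i; rewrite leqn0. Qed.

Lemma reach_cons (w : site -> bool) z z1 z2 : w z -> inL z -> step z z1 -> reach w z1 z2 -> reach w z z2.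
Proof.
move=> hw hz hst [k [f [h0 hk hL hs]]].
exists k.+1, (fun i => if i is i'.+1 then f i' else z); split=> //.
  by case.
case=> [_|i hi]; first by rewrite h0.
exact: hs.
Qed.

Lemma reach_open (w : site -> bool) z z' : reach w z z' -> z <> z' -> w z.
Proof.
case=> [[|k]] [f [h0 hk hL hs]] hne.
  by exfalso; apply: hne; rewrite -h0 -hk.
by have [] := hs 0%N (ltac:(lia)); rewrite h0.
Qed.

Definition tau (z : site) : site := (z.1, z.2 + 2).
Definition taui (z : site) : site := (z.1, z.2 - 2).

Lemma tauK z : taui (tau z) = z.
Proof. by case: z => a b; rewrite /tau /taui /=; congr pair; lia. Qed.
Lemma tauiK z : tau (taui z) = z.
Proof. by case: z => a b; rewrite /tau /taui /=; congr pair; lia. Qed.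

Lemma inL_tau z : inL (tau z) <-> inL z.
Proof.
case: z => a b; rewrite /inL /tau /=; split=> -[h1 /dvdzP [c hc]]; split=> //;
  apply/dvdzP.
  by exists (c - 1); lia.
by exists (c + 1); lia.
Qed.

Lemma step_tau a b : step (tau a) (tau b) <-> step a b.
Proof.
case: a => a1 a2; case: b => b1 b2; rewrite /step /tau /=.
split; (case=> [[h1 h2]|[[h1 h2]|[h1 h2]]]; [left|right;left|right;right]); lia.
Qed.

Lemma reach_tau (w : site -> bool) z z' : reach (fun s => w (tau s)) z z' <-> reach w (tau z) (tau z').
Proof.
split.
  case=> k [f [h0 hk hL hs]].
  exists k, (tau \o f); split=> /=.
  - by rewrite h0.
  - by rewrite hk.
  - by move=> i hi; apply/inL_tau; apply: hL.
  - by move=> i hi; have [h1 h2] := hs i hi; split=> //; apply/step_tau.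
case=> k [f [h0 hk hL hs]].
exists k, (taui \o f); split=> /=.
- by rewrite h0 tauK.
- by rewrite hk tauK.
- by move=> i hi; apply/inL_tau; rewrite tauiK; apply: hL.
- by move=> i hi; rewrite tauiK; have [h1 h2] := hs i hi; split=> //;
    apply/step_tau; rewrite !tauiK.
Qed.

Lemma reach_straight (w : site -> bool) (z : site) (m : nat) : inL z ->
  (forall i : nat, (i < m)%N -> w (z.1 + i%:Z, z.2 + i%:Z)) ->
  reach w z (z.1 + m%:Z, z.2 + m%:Z).
Proof.
move=> hz hw; exists m, (fun i : nat => (z.1 + i%:Z, z.2 + i%:Z)); split=> /=.
- by case: z {hz hw} => a b /=; congr pair; lia.
- by [].
- move=> i _; case: hz => h1 /dvdzP [c hc]; split=> /=; first lia.
  by apply/dvdzP; exists (c + i%:Z); lia.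
- move=> i hi; split; first exact: hw.
  by left; split=> /=; lia.
Qed.

Section supl.
Variable R : realType.
Local Open Scope ereal_scope.
Ltac cleanE :=
  repeat match goal with
  | H : (_ <= _)%E = false |- _ => move/negbT: H; rewrite -ltNge => H
  | H : (_ < _)%E = false |- _ => move/negbT: H; rewrite -leNgt => H
  | H : is_true (_%:E <= _%:E)%E |- _ => rewrite lee_fin in H
  | H : is_true (_%:E < _%:E)%E |- _ => rewrite lte_fin in H
  end; rewrite -?(EFinD (R:=R)) ?lee_fin ?lte_fin; try lra.

Lemma esup_setU (X Y : set (\bar R)) :
  ereal_sup (X `|` Y) = maxe (ereal_sup X) (ereal_sup Y).
Proof.
apply/le_anti/andP; split.
  apply: ge_ereal_sup => x [] hx.
    by rewrite le_max (ereal_sup_ubound hx).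
  by rewrite le_max (ereal_sup_ubound hx) orbT.
by rewrite ge_max; apply/andP; split; apply: ereal_sup_le => x hx; [left|right].
Qed.

Lemma u_setU (w : site -> bool) n X Y :
  u (R:=R) w n (X `|` Y) = maxe (u (R:=R) w n X) (u (R:=R) w n Y).
Proof.
rewrite /u -esup_setU; congr ereal_sup.
rewrite -image_setU; congr image.
rewrite /xi; apply/seteqP; split=> x /=.
  by case=> z [hz|hz] hr; [left|right]; exists z.
by case=> -[z hz hr]; exists z => //; [left|right].
Qed.

Lemma u_ge (w : site -> bool) n X (y : int) :
  ((y%:~R)%:E <= u (R:=R) w n X) <-> exists2 x, xi w n X x & (y <= x)%R.
Proof.
split; last first.
  case=> x hx hyx; apply: le_trans (ereal_sup_ubound _); last by exists x.
  by rewrite lee_fin ler_int.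
move=> h; apply: contrapT => hn.
have : u (R:=R) w n X <= ((y - 1)%:~R)%:E.
  apply: ge_ereal_sup => _ [x hx <-]; rewrite lee_fin ler_int.
  case: (lerP y x) => // hyx; first by exfalso; apply: hn; exists x.
  lia.
move/(le_trans h); rewrite lee_fin ler_int; lia.
Qed.

Lemma u_le (w : site -> bool) n X (M : int) :
  (forall x, xi w n X x -> (x <= M)%R) -> u (R:=R) w n X <= (M%:~R)%:E.
Proof.
by move=> h; apply: ge_ereal_sup => _ [x hx <-]; rewrite lee_fin ler_int; apply: h.
Qed.

Lemma u_attained (w : site -> bool) n X (M : int) :
  (forall x, xi w n X x -> (x <= M)%R) ->
  u (R:=R) w n X = -oo \/ exists2 x, xi w n X x & u (R:=R) w n X = (x%:~R)%:E.
Proof.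
move=> hM; have hle : u (R:=R) w n X <= (M%:~R)%:E := u_le hM.
case: (pselect (exists x, xi w n X x)) => [[x0 hx0]|hn]; last first.
  left; rewrite /u.
  have -> : [set (x%:~R)%:E | x in xi w n X] = set0 :> set (\bar R).
    by apply/seteqP; split=> // t [x hx _]; exfalso; apply: hn; exists x.
  exact: ereal_sup0.
right.
have hge : ((x0%:~R)%:E <= u (R:=R) w n X) by apply/u_ge; exists x0.
set s := u w n X in hle hge *.
have sfin : s \is a fin_num.
  by rewrite fin_numE; apply/andP; split;
    [apply/negP => /eqP hs; rewrite hs in hge|apply/negP => /eqP hs; rewrite hs in hle].
have hs : s = (fine s)%:E by rewrite fineK.
have : ((fine s - 1)%R)%:E < ereal_sup [set (x%:~R)%:E | x in xi w n X].
  by rewrite -/(u w n X) -/s {2}hs lte_fin; lra.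
case/ereal_sup_gt => _ [x1 hx1 <-]; rewrite lte_fin => hx1s.
exists x1 => //; apply/le_anti/andP; split; last first.
  by apply: ereal_sup_ubound; exists x1.
apply: ge_ereal_sup => _ [x hx <-]; rewrite lee_fin ler_int.
have : (x%:~R : R)%:E <= s by apply: ereal_sup_ubound; exists x.
rewrite hs lee_fin => hxs.
have : ((x%:~R : R) < (x1 + 1)%:~R)%R by rewrite intrD; lra.
rewrite ltr_int; lia.
Qed.

Lemma ediff_ge0 (a b : \bar R) : a < +oo -> 0 <= ediff (maxe a b) a.
Proof.
rewrite /ediff maxEle; case: a => [r||] //; case: b => [s||] //= _;
  rewrite ?leey ?leNye ?lee_fin /= //; try (case: (lerP r s) => /= ?); rewrite -?(@EFinD R) ?lee_fin ?addey ?addye ?leey //; lra.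
Qed.

Lemma ediff_mono (a a' b : \bar R) : a <= a' -> a' < +oo ->
  ediff (maxe a' b) a' <= ediff (maxe a b) a.
Proof.
rewrite /ediff !maxEle; case: a' => [r'||]; case: a => [r||]; case: b => [s||] //= ;
  rewrite ?leey ?leNye ?lee_fin /= // => *;
  try (case: (lerP r' s) => /= ?); try (case: (lerP r s) => /= ?);
  rewrite -?(@EFinD R) ?lee_fin ?addey ?addye ?leey //; lra.
Qed.
End supl.

Lemma count_le (R : realType) (L : nat) (Y ia : int) (s : R) : ia%:~R <= s ->
  \sum_(k < L) ((ia < Y + k%:Z) && ((Y + k%:Z)%:~R <= s))%:R <= s - ia%:~R.
Proof.
elim: L Y ia => [|L IH] Y ia hs; first by rewrite big_ord0; lra.
rewrite big_ord_recl /=.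
have hsh : forall i : 'I_L, Y + (lift ord0 i)%:Z = (Y + 1) + i%:Z.
  by move=> i; rewrite /= /bump /=; lia.
under eq_bigr => i _ do rewrite hsh.
case: (lerP Y ia) => hYa.
  have -> : (ia < Y + 0%:Z) = false by apply/negbTE; rewrite -leNgt; lia.
  by rewrite /= add0r; apply: IH.
case: (lerP (Y%:~R : R) s) => hYs; last first.
  have -> : ((Y + 0%:Z)%:~R <= s) = false by apply/negbTE; rewrite -ltNge addr0.
  rewrite andbF add0r big1 ?subr_ge0 // => i _.
  have -> : (((Y + 1) + i%:Z)%:~R <= s) = false.
    apply/negbTE; rewrite -ltNge; apply: lt_le_trans hYs _.
    by rewrite ler_int; lia.
  by rewrite andbF.
have -> : (ia < Y + 0%:Z) = true by apply/idP; lia.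
rewrite addr0 hYs /=.
have : \sum_(i < L) ((Y < Y + 1 + i%:Z) && ((Y + 1 + i%:Z)%:~R <= s))%:R <= s - Y%:~R.
  exact: IH.
have -> : \sum_(i < L) ((ia < Y + 1 + i%:Z) && ((Y + 1 + i%:Z)%:~R <= s))%:R =
   \sum_(i < L) ((Y < Y + 1 + i%:Z) && ((Y + 1 + i%:Z)%:~R <= s))%:R :> R.
  apply: eq_bigr => i _.
  have -> : (ia < Y + 1 + i%:Z) = true by apply/idP; lia.
  have -> : (Y < Y + 1 + i%:Z) = true by apply/idP; lia.
  by [].
have : (ia + 1)%:~R <= (Y%:~R : R) by rewrite ler_int; lia.
rewrite intrD; lra.
Qed.

Definition Dset : set site :=
  [set z | inL z /\ (z.1 = 0 \/ z.1 = 1) /\ z.2 < 2].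

Lemma C_bound z : Cset z -> 0 <= z.1 /\ z.2 <= z.1 - 2.
Proof. case=> [[h0 /dvdzP [c hc]] [h1 h2]]; lia. Qed.

Lemma D_bound z : Dset z -> 0 <= z.1 /\ z.2 <= z.1.
Proof. case=> [[h0 /dvdzP [c hc]] [h1 h2]]; lia. Qed.

Lemma CD z : Cset z -> Dset z.
Proof. by case=> h1 [h2 h3]; split=> //; split=> //; lia. Qed.

Lemma oD : Dset o.
Proof. by split; [split=> //; apply/dvdzP; exists 0|split; [left|]]. Qed.

Lemma o11D : Dset (1, 1).
Proof. by split; [split=> //; apply/dvdzP; exists 1|split; [right|]]. Qed.

Lemma D_cases z : Dset z -> [\/ Cset z, z = o | z = (1, 1)].
Proof.
case: z => a b; case=> [[h0 /dvdzP [c hc]] [h1 h2]]; simpl in *.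
case: (ltrP b 0) => hb.
  by apply: Or31; split; [split=> //; apply/dvdzP; exists c|split].
case: h1 => ha; rewrite ha in hc *.
  by apply: Or32; rewrite /o; congr pair; lia.
by apply: Or33; congr pair; lia.
Qed.

Lemma C_tau z : Cset z -> Dset (tau z).
Proof.
case=> h1 [h2 h3]; split; first by apply/inL_tau.
by rewrite /tau /=; split=> //; lia.
Qed.

Lemma D_taui z : Dset z -> Cset (taui z).
Proof.
case=> h1 [h2 h3]; split; first by apply/inL_tau; rewrite tauiK.
by rewrite /taui /=; split=> //; lia.
Qed.

Lemma xi_tau (w : site -> bool) n x :
  xi (fun s => w (tau s)) n Cset x <-> xi w n Dset (x + 2).
Proof.
split.
  case=> z hz /reach_tau hr; exists (tau z); first exact: C_tau.
  by move: hr; rewrite /tau /=.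
case=> z hz hr; exists (taui z); first exact: D_taui.
apply/reach_tau; rewrite tauiK.
by have -> : tau (n%:Z, x) = (n%:Z, x + 2) by [].
Qed.

Lemma xi_boundD (w : site -> bool) n X x : X `<=` Dset -> xi w n X x -> x <= n%:Z.
Proof.
move=> hX [z /hX /D_bound hz /reach_bound /= hb]; lia.
Qed.

Lemma xi_boundC (w : site -> bool) n X x : X `<=` Cset -> xi w n X x -> x <= n%:Z - 2.
Proof.
move=> hX [z /hX /C_bound hz /reach_bound /= hb]; lia.
Qed.

Definition upd (v : site -> bool) (z : site) (b : bool) : site -> bool :=
  fun s => if s == z then b else v s.

Definition dep (S : seq site) (G : (site -> bool) -> bool) :=
  forall v v', (forall s, s \in S -> v s = v' s) -> G v = G v'.

Fixpoint Qf (R : comRingType) (p : R) (k : nat) (S : seq site)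
  (G : (site -> bool) -> bool) : R :=
  match S with
  | [::] => if G (fun _ => false) then p ^+ k else 0
  | z :: S' => Qf p k.+1 S' (fun v => G (upd v z true))
             + Qf p k S' (fun v => G (upd v z false))
             - Qf p k.+1 S' (fun v => G (upd v z false))
  end.

Lemma Qf_factor (R : comRingType) (p : R) S : forall k G, Qf p k S G = p ^+ k * Qf p 0 S G.
Proof.
elim: S => [|z S IH] k G /=.
  by case: ifP; rewrite ?mulr0 ?mulr1.
rewrite [Qf p k.+1 S _]IH [Qf p k.+1 S _]IH [Qf p k S _]IH [Qf p 1 S _]IH [Qf p 1 S _]IH exprS expr1.
ring.
Qed.

Lemma dep_split S z G : dep (z :: S) G ->
  [/\ dep S (fun v => G (upd v z true)), dep S (fun v => G (upd v z false)) &
   forall v, G v = if v z then G (upd v z true) else G (upd v z false)].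
Proof.
move=> hG; split.
- move=> v v' h; apply: hG => s; rewrite inE /upd => /orP [/eqP ->|hs].
    by rewrite eqxx.
  by case: eqP => // _; apply: h.
- move=> v v' h; apply: hG => s; rewrite inE /upd => /orP [/eqP ->|hs].
    by rewrite eqxx.
  by case: eqP => // _; apply: h.
- move=> v; have -> : G v = G (upd v z (v z)).
    by apply: hG => s _; rewrite /upd; case: eqP => [->|].
  by case: (v z).
Qed.

Lemma dep_nil G : dep [::] G -> forall v, G v = G (fun _ => false).
Proof. by move=> hG v; apply: hG. Qed.

Lemma set_andb (T : Type) (a b : T -> bool) :
  [set t | a t && b t] = [set t | a t] `&` [set t | b t].
Proof. by apply/seteqP; split=> t /=; [move/andP|move=> [-> ->]]. Qed.

Section prob.
Variables (R : realType) (d : measure_display) (T : measurableType d).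
Variables (P : probability T R) (p : R) (w : T -> site -> bool).
Hypothesis hB : bernoulli_field P p w.

Definition allin (s : seq site) := all (fun z => `[< inL z >]) s.

Lemma meas_site z : inL z -> measurable [set t | w t z].
Proof. by case: hB => h _; apply: h. Qed.

Lemma meas_all (T0 : seq site) : allin T0 -> measurable [set t | all (w t) T0].
Proof.
elim: T0 => [|z T0 IH] /=.
  by move=> _; have -> : [set t : T | true] = setT by apply/seteqP.
move=> /andP [/asboolP hz h].
rewrite set_andb; apply: measurableI; first exact: meas_site.
exact: IH.
Qed.

Lemma P_all (T0 : seq site) : uniq T0 -> allin T0 ->
  P [set t | all (w t) T0] = (p ^+ size T0)%:E.
Proof.
move=> hu ha; case: hB => _ [_ h]; rewrite -(h _ hu ha); congr (P _).
elim: T0 {hu ha} => [|z T0 IH] /=; first by rewrite big_nil; apply/seteqP.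
by rewrite big_cons -IH set_andb.
Qed.

Lemma P_fin (A : set T) : measurable A -> P A = (fine (P A))%:E.
Proof. by move=> hA; rewrite fineK // fin_num_measure. Qed.

Lemma mainQ S : forall T0 G, uniq (T0 ++ S) -> allin (T0 ++ S) -> dep S G ->
  measurable [set t | G (w t)] /\
  P [set t | all (w t) T0 && G (w t)] = (Qf p (size T0) S G)%:E.
Proof.
elim: S => [|z S IH] T0 G hu ha hG.
  have hc := dep_nil hG; rewrite cats0 in hu ha; rewrite /=.
  case hc0 : (G (fun _ => false)).
    have -> : [set t | G (w t)] = setT by apply/seteqP; split=> // t _; rewrite /= hc.
    split; first exact: measurableT.
    rewrite -P_all //; congr (P _); apply/seteqP; split=> t /=.
      by case/andP.
    by move=> ->; rewrite hc.
  have -> : [set t | G (w t)] = set0 by apply/seteqP; split=> // t; rewrite /= hc hc0.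
  split; first exact: measurable0.
  have -> : [set t | all (w t) T0 && G (w t)] = set0.
    by apply/seteqP; split=> // t; rewrite /= hc hc0 andbF.
  by rewrite measure0.
have [hG1 hG0 hGs] := dep_split hG.
set G1 := (fun v => G (upd v z true)) in hG1 hGs *.
set G0 := (fun v => G (upd v z false)) in hG0 hGs *.
have hperm : perm_eq (T0 ++ z :: S) ((z :: T0) ++ S).
  by rewrite -cat1s perm_catCA.
have hu' : uniq ((z :: T0) ++ S) by rewrite -(perm_uniq hperm).
have ha' : allin ((z :: T0) ++ S) by rewrite /allin -(perm_all _ hperm).
have hu0 : uniq (T0 ++ S) by move: hu'; rewrite /= => /andP [].
have ha0 : allin (T0 ++ S) by move: ha'; rewrite /allin /= => /andP [].
have hz : inL z by move: ha'; rewrite /allin /= => /andP [/asboolP].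
have [m1 q1] := IH (z :: T0) G1 hu' ha' hG1.
have [m0 q0] := IH T0 G0 hu0 ha0 hG0.
have [_ q0'] := IH (z :: T0) G0 hu' ha' hG0.
have hall0 : allin T0 by move: ha0; rewrite /allin all_cat => /andP [].
have hallz : allin (z :: T0) by move: ha'; rewrite /allin all_cat => /andP [].
have mA T1 (G2 : (site -> bool) -> bool) : allin T1 -> measurable [set t | G2 (w t)] ->
    measurable [set t | all (w t) T1 && G2 (w t)].
  by move=> h1 h2; rewrite set_andb; apply: measurableI => //; exact: meas_all.
split.
  have -> : [set t | G (w t)] =
      ([set t | w t z] `&` [set t | G1 (w t)]) `|` (~` [set t | w t z] `&` [set t | G0 (w t)]).
    apply/seteqP; split=> t /=; rewrite hGs; case: (w t z) => /=.
    - by move=> h; left.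
    - by move=> h; right.
    - by case=> -[].
    - by case=> -[].
  apply: measurableU; apply: measurableI => //; first exact: meas_site.
  by apply: measurableC; exact: meas_site.
set A1 := [set t | all (w t) (z :: T0) && G1 (w t)].
set A0 := [set t | all (w t) T0 && G0 (w t)].
set A0' := [set t | all (w t) (z :: T0) && G0 (w t)].
have mA1 : measurable A1 by apply: mA.
have mA0 : measurable A0 by apply: mA.
have mA0' : measurable A0' by apply: mA.
have -> : [set t | all (w t) T0 && G (w t)] = A1 `|` (A0 `\` A0').
  apply/seteqP; split=> t; rewrite /A1 /A0 /A0' /= hGs /G1 /G0; case: (w t z) => /=.
  - by move=> h; left.
  - by move=> h; right; split=> //; rewrite andbF.
  - by case=> [//|[] h /negP]; rewrite h.
  - by case=> [//|[]].
rewrite measureU //; last first.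
  - apply/seteqP; split=> // t; rewrite /A1 /A0 /A0' /=.
    move=> [/andP [/andP [hwt _] h1] [h0 hn]]; apply: hn.
    by move/andP: h0 => [-> ->]; rewrite hwt.
  - by apply: measurableD.
rewrite measureD //; last first.
  by apply: (le_lt_trans (probability_le1 P mA0)); exact: ltey.
have -> : A0 `&` A0' = A0'.
  apply/seteqP; split=> t; rewrite /A1 /A0 /A0' /=; first by case.
  by move=> h; split=> //; move/andP: h => [/andP [_ ->] ->].
transitivity ((P A1 + (P A0 - P A0'))%E); first by [].
move: q1 q0 q0'; rewrite -/A1 -/A0 -/A0' => -> -> -> /=.
by rewrite -EFinB -EFinD addrA.
Qed.

Lemma probG S G : uniq S -> allin S -> dep S G ->
  measurable [set t | G (w t)] /\ P [set t | G (w t)] = (Qf p 0 S G)%:E.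
Proof.
move=> hu ha hG; have [m q] := mainQ (T0 := [::]) hu ha hG.
by split=> //; rewrite -q.
Qed.

Lemma indepG S T0 G : uniq (T0 ++ S) -> allin (T0 ++ S) -> dep S G ->
  P [set t | all (w t) T0 && G (w t)] = ((p ^+ size T0)%:E * P [set t | G (w t)])%E.
Proof.
move=> hu ha hG; have [m q] := mainQ hu ha hG.
have hu0 : uniq S by move: hu; rewrite cat_uniq => /and3P [].
have ha0 : allin S by move: ha; rewrite /allin all_cat => /andP [].
have [_ q0] := probG hu0 ha0 hG.
by rewrite q q0 Qf_factor EFinM.
Qed.

End prob.

Lemma path_window (w : site -> bool) z (n : nat) (x : int) k (f : nat -> site) :
  f 0%N = z -> f k = (n%:Z, x) ->
  (forall i, (i <= k)%N -> inL (f i)) ->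
  (forall i, (i < k)%N -> w (f i) /\ step (f i) (f i.+1)) ->
  (forall i, (i < k)%N -> 0 <= (f i).1 /\ (f i).1 + 1 <= n%:Z /\
          x - n%:Z <= (f i).2 /\ (f i).2 <= z.2 + n%:Z /\ (i != 0%N -> (f i).1 >= 1)).
Proof.
move=> h0 hk hL hs i hi.
have hs' : forall i, (i < k)%N -> step (f i) (f i.+1) by move=> j /hs [].
have [h1 _] := hL i (ltnW hi).
have := path_bound hs' (i:=i) (j:=k) (ltac:(apply/andP; split; lia)).
have := path_bound hs' (i:=0) (j:=i) (ltac:(apply/andP; split; lia)).
have [hz _] := hL 0%N (ltac:(lia)).
rewrite hk h0 /=. rewrite h0 in hz. lia.
Qed.

Definition Gev (n : nat) (y : int) (X : set site) (v : site -> bool) : bool :=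
  `[< exists2 x, xi v n X x & y <= x >].

Definition winL (n : nat) (a : int) (c : nat) : seq site :=
  [seq (i%:Z, a + j%:Z) | i <- iota 0 n, j <- iota 0 c].

Definition winS (n : nat) (y : int) (excl : bool) : seq site :=
  seq.filter (fun s => `[< inL s >] && (excl ==> (s != o)))
    (winL n (y - n%:Z)%R (absz (2 * n%:Z + 2 - y)%R)).

Lemma winS_uniq (n : nat) (y : int) (e : bool) : uniq (winS n y e).
Proof.
apply: filter_uniq; apply: allpairs_uniq; try exact: iota_uniq.
by move=> [i j] [i' j'] _ _ [] /= h1 h2; congr pair => //; lia.
Qed.

Lemma winS_all (n : nat) (y : int) (e : bool) : allin (winS n y e).
Proof. by apply/allP => s; rewrite mem_filter => /andP [/andP []]. Qed.

Lemma winS_mem (n : nat) (y : int) (e : bool) (s : site) : inL s -> (e -> s <> o) ->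
  0 <= s.1 -> s.1 + 1 <= n%:Z -> y - n%:Z <= s.2 -> s.2 <= n%:Z + 1 ->
  s \in winS n y e.
Proof.
move=> hL he h1 h2 h3 h4; rewrite mem_filter; apply/andP; split.
  apply/andP; split; first by apply/asboolP.
  by case: e he => //= he; apply/eqP; apply: he.
case: s {hL he} h1 h2 h3 h4 => a b /= h1 h2 h3 h4.
apply/allpairsP; exists (absz a, absz (b - (y - n%:Z))%R) => /=; split.
- by rewrite mem_iota; lia.
- by rewrite mem_iota; lia.
- by congr pair; lia.
Qed.

Lemma dep_Gev (n : nat) (y : int) (e : bool) X : X `<=` Dset -> (e -> ~ X o) -> dep (winS n y e) (Gev n y X).
Proof.
move=> hX hXo.
suff H : forall v v', (forall s, s \in winS n y e -> v s = v' s) ->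
    Gev n y X v -> Gev n y X v'.
  move=> v v' h; apply/idP/idP; first exact: H.
  by apply: H => s /h ->.
move=> v v' h /asboolP [x [z hz hr] hyx]; apply/asboolP; exists x => //.
exists z => //; apply: reach_dep hr; last exact: h.
move=> k f h0 hk hL hs i hi.
have [hD1 hD2] := D_bound (hX _ hz).
have hz1 : z.1 <= 1 by case: (hX _ hz) => _ [[->|->] _].
have [b1 [b2 [b3 [b4 b5]]]] := path_window h0 hk hL hs hi.
apply: winS_mem => //.
- by apply: hL; lia.
- move=> he hfo.
  case: (eqVneq i 0%N) => [hi0|hi0].
    by apply: (hXo he); rewrite -hfo hi0 h0.
  by have := b5 hi0; rewrite hfo /=; lia.
- lia.
- lia.
Qed.

Lemma dep_and S G1 G2 : dep S G1 -> dep S G2 -> dep S (fun v => G1 v && G2 v).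
Proof. by move=> h1 h2 v v' h; rewrite (h1 v v') // (h2 v v'). Qed.

Lemma dep_neg S G : dep S G -> dep S (fun v => ~~ G v).
Proof. by move=> h v v' hv; rewrite (h v v'). Qed.

Lemma dep_all S pi : {subset pi <= S} -> dep S (fun v => all v pi).
Proof.
move=> hs v v' h; apply: eq_in_all => s hs'; exact: h (hs _ hs').
Qed.

Lemma dep_sub S S' G : {subset S <= S'} -> dep S G -> dep S' G.
Proof. by move=> hs h v v' hv; apply: h => s /hs; apply: hv. Qed.

Lemma Gev_mono n y X Y v : X `<=` Y -> Gev n y X v -> Gev n y Y v.
Proof.
move=> hXY /asboolP [x [z hz hr] h]; apply/asboolP; exists x => //.
by exists z => //; apply: hXY.
Qed.

Lemma Gev_U n y X Y v : Gev n y (X `|` Y) v = Gev n y X v || Gev n y Y v.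
Proof.
apply/asboolP/orP.
  case=> x [z [hz|hz] hr] h; [left|right]; apply/asboolP; exists x => //; by exists z.
case=> /asboolP [x [z hz hr] h]; exists x => //; exists z => //; by [left|right].
Qed.

Lemma D_eq : Dset = Cset `|` [set o] `|` [set (1, 1)].
Proof.
apply/seteqP; split=> z.
  by case/D_cases => [h|->|->]; [left; left|left; right|right].
case=> [[h|->]|->]; [exact: CD|exact: oD|exact: o11D].
Qed.

Lemma Gev_open_o n y (v : site -> bool) : v o ->
  Gev n y Dset v = Gev n y (Cset `|` [set o]) v.
Proof.
move=> ho; rewrite D_eq Gev_U; apply/orP/idP.
  case=> // /asboolP [x [z hz hr] h]; apply/asboolP; exists x => //.
  exists o; first by right.
  rewrite hz in hr; have hLo : inL o by case: oD.
  apply: (reach_cons ho hLo _ hr).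
  by left; split.
by move=> h; left.
Qed.

Lemma Gev_closed_o n y (v : site -> bool) : (0 < n)%N -> ~~ v o ->
  Gev n y (Cset `|` [set o]) v = Gev n y Cset v /\
  Gev n y Dset v = Gev n y (Cset `|` [set (1,1)]) v.
Proof.
move=> hn ho.
have hno : forall x, ~ reach v o (n%:Z, x).
  move=> x hr; have hne : o <> (n%:Z, x) by case; lia.
  by move/negP: ho; apply; apply: (reach_open hr hne).
split.
  rewrite Gev_U; apply/orP/idP; last by left.
  by case=> // /asboolP [x [z hz hr] _]; rewrite hz in hr; exfalso; apply: (hno x).
rewrite D_eq -setUA [[set o] `|` _]setUC setUA !(Gev_U _ _ (Cset `|` [set (1,1)])).
apply/orP/idP; last by left.
by case=> // /asboolP [x [z hz hr] _]; rewrite hz in hr; exfalso; apply: (hno x).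
Qed.

Lemma Gev_tau n y (v : site -> bool) :
  Gev n (y - 2) Cset (fun s => v (tau s)) = Gev n y Dset v.
Proof.
apply/asboolP/asboolP.
  case=> x /xi_tau hx h; exists (x + 2) => //; lia.
case=> x hx h; exists (x - 2); last lia.
by apply/xi_tau; have -> : x - 2 + 2 = x by lia.
Qed.

Section shift.
Variables (R : realType) (d : measure_display) (T : measurableType d).
Variables (P : probability T R) (p : R) (w : T -> site -> bool).
Hypothesis hB : bernoulli_field P p w.

Lemma bernoulli_tau : bernoulli_field P p (fun t s => w t (tau s)).
Proof.
case: hB => h1 [h2 h3]; split; last split.
- by move=> z /inL_tau; apply: h1.
- by move=> z /inL_tau; apply: h2.
- move=> s hu ha.
  have hu' : uniq (map tau s).
    by rewrite map_inj_uniq // => a b /(congr1 taui); rewrite !tauK.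
  have ha' : all (fun z => `[< inL z >]) (map tau s).
    rewrite all_map; apply/allP => z hz /=; apply/asboolP/inL_tau.
    by move/allP: ha => /(_ z hz)/asboolP.
  by rewrite -(size_map tau) -(h3 _ hu' ha') big_map.
Qed.
End shift.

Section probmain.
Variables (R : realType) (d : measure_display) (T : measurableType d).
Variables (P : probability T R) (p : R) (w : T -> site -> bool).
Hypothesis hB : bernoulli_field P p w.
Variable n : nat.

Definition Ev (y : int) (X : set site) := [set t | Gev n y X (w t)].

Lemma Ev_meas y X : X `<=` Dset -> measurable (Ev y X).
Proof.
move=> hX.
have hd := dep_Gev (n:=n) (y:=y) (e:=false) hX (fun h => False_ind _ (notF h)).
by have [m _] := probG hB (winS_uniq n y false) (winS_all n y false) hd.
Qed.

Lemma Ev_tau y : P (Ev y Dset) = P (Ev (y - 2) Cset).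
Proof.
have hBt := bernoulli_tau hB.
have hd := dep_Gev (n:=n) (y:=y - 2) (e:=false) (X:=Cset) CD (fun h => False_ind _ (notF h)).
have [_ q1] := probG hBt (winS_uniq n (y - 2) false) (winS_all n (y - 2) false) hd.
have [_ q2] := probG hB (winS_uniq n (y - 2) false) (winS_all n (y - 2) false) hd.
have -> : Ev y Dset = [set t | Gev n (y - 2) Cset (fun s => w t (tau s))].
  by apply/seteqP; split=> t /=; rewrite Gev_tau.
by rewrite q1 -q2.
Qed.

Lemma PD (A B : set T) : measurable A -> measurable B -> B `<=` A ->
  P (A `\` B) = (fine (P A) - fine (P B))%:E.
Proof.
move=> mA mB hBA.
have fA := fin_num_measure P A mA.
have fB := fin_num_measure P B mB.
transitivity (P A - P (A `&` B))%E.
  by rewrite measureD //; apply: (le_lt_trans (probability_le1 P mA)); exact: ltey.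
have -> : A `&` B = B by apply/seteqP; split=> t; [case|move=> h; split=> //; apply: hBA].
by rewrite EFinB !fineK.
Qed.

Definition cf (y : int) (X : set site) := fine (P (Ev y X)).

Lemma P_Ev y X : X `<=` Dset -> P (Ev y X) = (cf y X)%:E.
Proof. by move=> hX; rewrite /cf fineK // fin_num_measure //; apply: Ev_meas. Qed.

Lemma Ev_mono y X Y : X `<=` Y -> Ev y X `<=` Ev y Y.
Proof. by move=> h t /=; apply: Gev_mono. Qed.

Lemma cf_mono y X Y : X `<=` Y -> Y `<=` Dset -> cf y X <= cf y Y.
Proof.
move=> hXY hY.
have hX : X `<=` Dset by move=> z /hXY /hY.
rewrite -lee_fin -!P_Ev //.
by apply: le_measure; rewrite ?inE; [apply: Ev_meas|apply: Ev_meas|apply: Ev_mono].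
Qed.

Lemma cf_ge0 y X : X `<=` Dset -> 0 <= cf y X.
Proof. by move=> hX; rewrite -lee_fin -P_Ev. Qed.

Definition Co := Cset `|` [set o].
Definition C1 := Cset `|` [set (1, 1)].

Lemma CoD : Co `<=` Dset. Proof. by move=> z [/CD|->] //; exact: oD. Qed.
Lemma C1D : C1 `<=` Dset. Proof. by move=> z [/CD|->] //; exact: o11D. Qed.
Lemma CCo : Cset `<=` Co. Proof. by move=> z h; left. Qed.
Lemma CC1 : Cset `<=` C1. Proof. by move=> z h; left. Qed.

Hypothesis hn : (0 < n)%N.

Lemma key_o y : cf y Dset - cf y Co = (1 - p) * (cf y C1 - cf y Cset).
Proof.
set F := fun v => Gev n y C1 v && ~~ Gev n y Cset v.
have hCo : ~ Cset o by case=> _ [_ /=]; rewrite ltxx.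
have hC1o : ~ C1 o by case=> [//|/= [] //].
have hdF : dep (winS n y true) F.
  apply: dep_and; first exact: dep_Gev C1D (fun _ => hC1o).
  by apply: dep_neg; exact: dep_Gev CD (fun _ => hCo).
have hu : uniq ([:: o] ++ winS n y true).
  rewrite /= winS_uniq andbT; rewrite mem_filter; apply/negP => /andP [/andP [_ /= /eqP //] _].
have ha : allin ([:: o] ++ winS n y true).
  rewrite /allin /=; apply/andP; split; first by apply/asboolP; case: oD.
  exact: winS_all.
have hind := indepG hB hu ha hdF.
have [mF _] := probG hB (winS_uniq n y true) (winS_all n y true) hdF.
have eF : [set t | F (w t)] = Ev y C1 `\` Ev y Cset.
  by apply/seteqP; split=> t /=; [move/andP=> [h1 /negP h2]|move=> [h1 /negP h2]; apply/andP].
have e1 : Ev y Dset `\` Ev y Co =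
    [set t | F (w t)] `\` [set t | all (w t) [:: o] && F (w t)].
  apply/seteqP; split=> t; rewrite /Ev /=.
    case ho : (w t o).
      by rewrite (Gev_open_o _ _ ho) => -[].
    have [h1 h2] := Gev_closed_o y hn (negbT ho).
    by rewrite h1 h2 => -[h3 h4]; split; [apply/andP; split=> //; apply/negP|].
  case ho : (w t o) => /=.
    by case=> a /(_ a).
  have [h1 h2] := Gev_closed_o y hn (negbT ho).
  by rewrite h1 h2 => -[/andP [h3 /negP h4] _].
have mo : measurable [set t | all (w t) [:: o] && F (w t)].
  rewrite set_andb; apply: measurableI => //; apply: (meas_all hB).
  by rewrite /allin /=; apply/andP; split=> //; apply/asboolP; case: oD.
have := PD (Ev_meas y (X:=Dset) (fun z h => h)) (Ev_meas y CoD) (Ev_mono (y:=y) CoD).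
rewrite e1 PD //; last by move=> t /= /andP [].
rewrite hind eF PD; last 3 first.
- exact: Ev_meas C1D.
- exact: Ev_meas CD.
- exact: Ev_mono CC1.
rewrite /= expr1 => -[] h.
rewrite /cf -h; ring.
Qed.

Lemma per_y y : p <= 1 ->
  cf y Co - cf y Cset >= p * (cf (y - 2) Cset - cf y Cset).
Proof.
move=> hp1.
have hk := key_o y.
have hd : cf y Dset = cf (y - 2) Cset by rewrite /cf Ev_tau.
have h1 : cf y C1 <= cf y Dset by apply: cf_mono C1D (fun z h => h).
have h2 : cf y Cset <= cf y Co by apply: cf_mono; [exact: CCo|exact: CoD].
rewrite -hd.
have : (1 - p) * (cf y C1 - cf y Cset) <= (1 - p) * (cf y Dset - cf y Cset).
  by apply: ler_wpM2l; lra.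
lra.
Qed.

Lemma c_zero y : n%:Z - 1 <= y -> cf y Cset = 0.
Proof.
move=> hy; rewrite /cf.
have -> : Ev y Cset = set0.
  apply/seteqP; split=> // t /= /asboolP [x hx hyx].
  have := xi_boundC (fun z h => h) hx; lia.
by rewrite measure0.
Qed.

End probmain.

Definition piw (n k : nat) : seq site :=
  [seq (i%:Z, i%:Z - 2 * k%:Z - 2) | i <- iota 0 n].

Fixpoint Sm (n m : nat) : seq site :=
  if m is m'.+1 then piw n m' ++ Sm n m' else [::].

Definition Gm (n m : nat) (v : site -> bool) :=
  all (fun k => ~~ all v (piw n k)) (iota 0 m).

Lemma piw_prop n k (s : site) : s \in piw n k ->
  inL s /\ s.1 - s.2 = 2 * k%:Z + 2 /\ 0 <= s.1 /\ s.1 < n%:Z.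
Proof.
case/mapP => i; rewrite mem_iota => hi -> /=; split; last by split; lia.
split=> /=; first lia.
by apply/dvdzP; exists (i%:Z - k%:Z - 1); lia.
Qed.

Lemma piw_uniq n k : uniq (piw n k).
Proof.
rewrite map_inj_uniq ?iota_uniq // => i j [] h _; lia.
Qed.

Lemma Sm_prop n m (s : site) : s \in Sm n m -> inL s /\ s.1 - s.2 <= 2 * m%:Z.
Proof.
elim: m => [|m IH] //=; rewrite mem_cat => /orP [/piw_prop [h1 [h2 _]]|/IH [h1 h2]].
  by split=> //; lia.
by split=> //; lia.
Qed.

Lemma Sm_uniq n m : uniq (Sm n m).
Proof.
elim: m => [|m IH] //=; rewrite cat_uniq piw_uniq IH andbT /=.
apply/hasPn => s hs; apply/negP => hp; have [_ h1] := Sm_prop hs.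
have [_ [h2 _]] := piw_prop hp; move: h1 h2; case: s {hs hp} => a b /= h1 h2; lia.
Qed.

Lemma Sm_all n m : allin (Sm n m).
Proof.
apply/allP => s; elim: m => [|m IH] //=; rewrite mem_cat => /orP [/piw_prop [h _]|/IH //].
by apply/asboolP.
Qed.

Lemma piw_sub n m k : (k < m)%N -> {subset piw n k <= Sm n m}.
Proof.
elim: m => [|m IH] //= hk s hs; rewrite mem_cat.
case: (ltngtP k m) => h.
- by rewrite (IH h s hs) orbT.
- lia.
- by rewrite -h hs.
Qed.

Lemma dep_Gm n m : dep (Sm n m) (Gm n m).
Proof.
move=> v v' h; apply: eq_in_all => k; rewrite mem_iota => hk /=.
congr negb; apply: eq_in_all => s hs; apply: h; apply: (piw_sub (m:=m) _ hs); lia.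
Qed.

Lemma Gm_S n m v : Gm n m.+1 v = Gm n m v && ~~ all v (piw n m).
Proof. by rewrite /Gm -addn1 iotaD all_cat /= andbT. Qed.

Lemma tele (R : comRingType) (g : int -> R) (Y : int) (L : nat) :
  \sum_(k < L) (g (Y + k%:Z - 2) - g (Y + k%:Z)) =
  g (Y - 2) + g (Y - 1) - g (Y + L%:Z - 2) - g (Y + L%:Z - 1).
Proof.
elim: L => [|L IH]; first by rewrite big_ord0 addr0; ring.
rewrite big_ord_recr /= IH.
have -> : Y + L.+1%:Z - 2 = Y + L%:Z - 1 by lia.
have -> : Y + L.+1%:Z - 1 = Y + L%:Z by lia.
ring.
Qed.

Section lower.
Variables (R : realType) (d : measure_display) (T : measurableType d).
Variables (P : probability T R) (p : R) (w : T -> site -> bool).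
Hypothesis hB : bernoulli_field P p w.
Variable n : nat.

Lemma Gm_meas m : measurable [set t | Gm n m (w t)].
Proof. by have [h _] := probG hB (@Sm_uniq n m) (@Sm_all n m) (@dep_Gm n m). Qed.

Lemma P_Gm m : P [set t | Gm n m (w t)] = ((1 - p ^+ n) ^+ m)%:E.
Proof.
elim: m => [|m IH].
  rewrite expr0 -(probability_setT P); congr (P _).
  by apply/seteqP; split.
have hu : uniq (piw n m ++ Sm n m) by exact: (@Sm_uniq n m.+1).
have ha : allin (piw n m ++ Sm n m) by exact: (@Sm_all n m.+1).
have hind := indepG hB hu ha (@dep_Gm n m).
have e : [set t | Gm n m.+1 (w t)] =
    [set t | Gm n m (w t)] `\` [set t | all (w t) (piw n m) && Gm n m (w t)].
  apply/seteqP; split=> t /=; rewrite Gm_S.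
    by move/andP=> [h1 h2]; split=> // /andP [h3 _]; move/negP: h2.
  by move=> [h1 h2]; apply/andP; split=> //; apply/negP => h3; apply: h2; apply/andP.
have mall : measurable [set t | all (w t) (piw n m) && Gm n m (w t)].
  rewrite set_andb; apply: measurableI; last exact: Gm_meas.
  by apply: (meas_all hB); move: ha; rewrite /allin all_cat => /andP [].
rewrite e (PD _ (Gm_meas m) mall); last by move=> t /= /andP [].
rewrite hind IH size_map size_iota /=.
by congr EFin; rewrite exprS; ring.
Qed.

Lemma c_lower m (y : int) : y <= n%:Z - 2 * m%:Z ->
  1 - (1 - p ^+ n) ^+ m <= cf P w n y Cset.
Proof.
move=> hy.
have hsub : ~` [set t | Gm n m (w t)] `<=` Ev w n y Cset.
  move=> t /= /negP /allPn [k]; rewrite mem_iota => hk /negPn hall.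
  apply/asboolP; exists (- 2 * k%:Z - 2 + n%:Z); last lia.
  exists (0, - 2 * k%:Z - 2).
    split; last by split=> /=; [left|lia].
    by split=> //=; apply/dvdzP; exists (- k%:Z - 1); lia.
  have := @reach_straight (w t) (0, - 2 * k%:Z - 2) n.
  rewrite /= add0r; apply.
    by split=> //=; apply/dvdzP; exists (- k%:Z - 1); lia.
  move=> i hi; rewrite add0r.
  have -> : - 2 * k%:Z - 2 + i%:Z = i%:Z - 2 * k%:Z - 2 by lia.
  by move/allP: hall; apply; apply/mapP; exists i => //; rewrite mem_iota.
have : (P (~` [set t | Gm n m (w t)]) <= P (Ev w n y Cset))%E.
  apply: le_measure; last exact: hsub.
    by apply: mem_set; apply: measurableC; exact: Gm_meas.
  by apply: mem_set; exact: (Ev_meas hB n y CD).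
rewrite probability_setC; last exact: Gm_meas.
by rewrite P_Gm (P_Ev hB) //; last exact: CD.
Qed.

End lower.

Lemma Gev_u (R : realType) n y X (v : site -> bool) :
  Gev n y X v = ((y%:~R)%:E <= u (R:=R) v n X)%E.
Proof.
apply/idP/idP => h.
  by apply/u_ge; exact/asboolP.
by move/u_ge: h => h; apply/asboolP.
Qed.

Lemma u_mono (R : realType) (v : site -> bool) n X Y : X `<=` Y ->
  (u (R:=R) v n X <= u (R:=R) v n Y)%E.
Proof.
move=> hXY; apply: ereal_sup_le => _ [x [z hz hr] <-].
by exists x => //; exists z => //; apply: hXY.
Qed.

Lemma u_ltey (R : realType) (v : site -> bool) n X : X `<=` Dset ->
  (u (R:=R) v n X < +oo)%E.
Proof.
move=> hX.
have h : (u (R:=R) v n X <= (n%:Z%:~R)%:E)%E by apply: u_le => x; apply: xi_boundD.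
by apply: le_lt_trans h _; exact: ltey.
Qed.

Lemma pw (R : realType) (v : site -> bool) n (L : nat) (Y : int) :
  (\sum_(k < L) (((Gev n (Y + k%:Z) Co v && ~~ Gev n (Y + k%:Z) Cset v)%:R : R)%:E)
    <= ediff (u (R:=R) v n Co) (u (R:=R) v n Cset))%E.
Proof.
have hbC : forall x, xi v n Cset x -> x <= n%:Z - 2 by move=> x; apply: xi_boundC.
have hab : (u (R:=R) v n Cset <= u (R:=R) v n Co)%E by apply: u_mono; exact: CCo.
have hbn : (u (R:=R) v n Co <= (n%:Z%:~R)%:E)%E.
  by apply: u_le => x; apply: xi_boundD; exact: CoD.
under eq_bigr => k _ do rewrite !(@Gev_u R).
case: (@u_attained R _ _ _ _ hbC) => [ha | [ia _ ha]]; rewrite ha in hab *.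
  case hb : (u (R:=R) v n Co) => [s||]; rewrite hb in hbn hab.
  - by rewrite /ediff /= leey.
  - by [].
  - by rewrite big1 ?lexx // => k _.
case hb : (u (R:=R) v n Co) => [s||]; rewrite hb in hbn hab.
- rewrite /ediff /= -EFinB sumEFin lee_fin.
  rewrite lee_fin in hab.
  apply: le_trans (count_le L Y hab).
  apply: ler_sum => k _; rewrite !lee_fin !ler_int.
  have -> : (Y + k%:Z <= ia) = ~~ (ia < Y + k%:Z) by rewrite -leNgt.
  by rewrite negbK andbC.
- by [].
- by [].
Qed.

Lemma int_mono (R : realType) d (T : measurableType d) (P : probability T R)
  (f g : T -> \bar R) : (forall t, 0 <= f t)%E -> (forall t, f t <= g t)%E ->
  (\int[P]_t f t <= \int[P]_t g t)%E.
Proof.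
move=> f0 fg.
have g0 : forall t, (0 <= g t)%E by move=> t; apply: le_trans (fg t).
rewrite (ge0_integralTE P f0) (ge0_integralTE P g0).
apply: ereal_sup_le => _ [h hh <-]; exists h => //= x.
exact: le_trans (hh x) (fg x).
Qed.

Section final.
Variables (R : realType) (d : measure_display) (T : measurableType d).
Variables (P : probability T R) (p : R) (w : T -> site -> bool).
Hypothesis hB : bernoulli_field P p w.
Variable n : nat.

Definition dif (X : set site) (t : T) : \bar R :=
  ediff (u (w t) n (X `|` [set o])) (u (w t) n X).

Lemma dif_ge0 X t : X `<=` Cset -> (0 <= dif X t)%E.
Proof.
move=> hX; rewrite /dif u_setU; apply: ediff_ge0; apply: u_ltey.
by move=> z /hX /CD.
Qed.

Lemma dif_mono X Y t : X `<=` Y -> Y `<=` Cset -> (dif Y t <= dif X t)%E.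
Proof.
move=> hXY hY; rewrite /dif !u_setU; apply: ediff_mono.
  exact: u_mono.
by apply: u_ltey => z /hY /CD.
Qed.

Lemma step_m (hn : (0 < n)%N) (hp : 0 <= p <= 1) (m : nat) :
  (((2 * p) * (1 - (1 - p ^+ n) ^+ m))%:E <= \int[P]_t dif Cset t)%E.
Proof.
have [hp0 hp1] : 0 <= p /\ p <= 1 by move/andP: hp.
set Y : int := n%:Z - 2 * m%:Z + 1.
set L : nat := (2 * m + 2)%N.
pose E (k : 'I_L) := Ev w n (Y + k%:Z) Co `\` Ev w n (Y + k%:Z) Cset.
have mE k : measurable (E k).
  by apply: measurableD; [exact: (Ev_meas hB n _ CoD)|exact: (Ev_meas hB n _ CD)].
pose g (t : T) : \bar R := (\sum_(k < L) ((\1_(E k) t : R))%:E)%E.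
have hg : (\int[P]_t g t <= \int[P]_t dif Cset t)%E.
  apply: int_mono => t.
    by apply: sume_ge0 => k _; rewrite lee_fin indicE; case: (t \in E k).
  apply: le_trans (@pw R (w t) n L Y); rewrite /g le_eqVlt; apply/orP; left; apply/eqP.
  apply: eq_bigr => k _; congr EFin; rewrite indicE; congr (_%:R); congr (nat_of_bool _).
  case: (boolP (Gev n (Y + k%:Z) Co (w t) && ~~ Gev n (Y + k%:Z) Cset (w t))) => hb.
    by apply: mem_set; move/andP: hb => [h1 /negP h2]; split.
  apply: negbTE; apply/negP; rewrite in_setE => -[h1 /negP h2]; move/negP: hb; apply; apply/andP.
  by split.
apply: le_trans hg.
rewrite /g integral_sum //; last by move=> k; exact: integrable_indic.
have hPE k : (\int[P]_x (\1_(E k) x : R)%:E =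
    (fine (P (Ev w n (Y + k%:Z) Co)) - fine (P (Ev w n (Y + k%:Z) Cset)))%:E)%E.
  rewrite integral_indic // setIT; transitivity (P (E k)); first by [].
  exact: (PD P (Ev_meas hB n _ CoD) (Ev_meas hB n _ CD) (Ev_mono CCo)).
under eq_bigr => k _ do rewrite hPE.
rewrite sumEFin lee_fin.
have h1 : \sum_(k < L) (p * (cf P w n (Y + k%:Z - 2) Cset - cf P w n (Y + k%:Z) Cset)) <=
          \sum_(k < L) (fine (P (Ev w n (Y + k%:Z) Co)) - fine (P (Ev w n (Y + k%:Z) Cset))).
  by apply: ler_sum => k _; exact: (per_y hB hn).
apply: le_trans h1.
rewrite -mulr_sumr (tele (fun y => cf P w n y Cset)).
have hz1 : cf P w n (Y + L%:Z - 2) Cset = 0 by apply: (c_zero P w hn); rewrite /Y /L; lia.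
have hz2 : cf P w n (Y + L%:Z - 1) Cset = 0 by apply: (c_zero P w hn); rewrite /Y /L; lia.
have hl1 : 1 - (1 - p ^+ n) ^+ m <= cf P w n (Y - 2) Cset.
  by apply: c_lower => //; rewrite /Y; lia.
have hl2 : 1 - (1 - p ^+ n) ^+ m <= cf P w n (Y - 1) Cset.
  by apply: c_lower => //; rewrite /Y; lia.
rewrite hz1 hz2 !subr0.
have : p * (2 * (1 - (1 - p ^+ n) ^+ m)) <= p * (cf P w n (Y - 2) Cset + cf P w n (Y - 1) Cset).
  by apply: ler_wpM2l => //; lra.
lra.
Qed.

End final.

Lemma small_pow (R : realType) (q e : R) : 0 <= q < 1 -> 0 < e -> exists m : nat, q ^+ m < e.
Proof.
move=> /andP [h0 h1] he.
have hq : `|q| < 1 by rewrite ger0_norm.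
have := @cvgr_dist_lt _ _ _ _ _ (fun m => q ^+ m) 0 (cvg_expr hq) _ he.
case=> N _ hN.
exists N; have := hN N (leqnn N) => /=.
by rewrite sub0r normrN ger0_norm // exprn_ge0.
Qed.

Section fin2.
Variables (R : realType) (d : measure_display) (T : measurableType d).
Variables (P : probability T R) (p : R) (w : T -> site -> bool).
Hypothesis hB : bernoulli_field P p w.

Lemma final_C n : (0 < n)%N -> 0 < p <= 1 ->
  ((2 * p)%:E <= \int[P]_t dif R w n Cset t)%E.
Proof.
move=> hn /andP [hp0 hp1].
have hpn0 : 0 < p ^+ n by apply: exprn_gt0.
have hpn1 : p ^+ n <= 1 by apply: exprn_ile1 => //; lra.
have hI0 : (0 <= \int[P]_t dif R w n Cset t)%E.
  by apply: integral_ge0 => t _; apply: dif_ge0.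
case: (leP ((2 * p)%:E) (\int[P]_t dif R w n Cset t)%E) => // hlt.
exfalso.
move: hI0 hlt (step_m hB hn); case: (\int[P]_t dif R w n Cset t)%E => [r||] //=.
move=> hr0 hr hstep; rewrite lee_fin in hr0; rewrite lte_fin in hr.
have he : 0 < (2 * p - r) / (2 * p) by apply: divr_gt0; lra.
have [m hm] := small_pow (q := 1 - p ^+ n) (ltac:(apply/andP; split; lra)) he.
have := hstep (ltac:(apply/andP; split; lra)) m; rewrite lee_fin => hs.
have : 2 * p * (1 - p ^+ n) ^+ m < 2 * p * ((2 * p - r) / (2 * p)).
  by rewrite ltr_pM2l //; lra.
rewrite mulrCA divff ?mulr1; last by lra.
lra.
Qed.

Lemma final_n0 : (2%:E <= \int[P]_t dif R w 0 Cset t)%E.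
Proof.
have h : forall t, (2%:E <= dif R w 0 Cset t)%E.
  move=> t; rewrite /dif.
  have hb1 : ((0%:~R)%:E <= u (R:=R) (w t) 0 (Cset `|` [set o]))%E.
    apply/u_ge; exists 0 => //; exists o; first by right.
    by apply: reach_refl; case: oD.
  have hb2 : (u (R:=R) (w t) 0 (Cset `|` [set o]) <= (0%:Z%:~R)%:E)%E.
    by apply: u_le => x; apply: xi_boundD => z [/CD|->] //; exact: oD.
  have ha : (u (R:=R) (w t) 0 Cset <= ((-2)%:~R)%:E)%E.
    by apply: u_le => x hx; have := xi_boundC (fun z h => h) hx.
  have -> : u (R:=R) (w t) 0 (Cset `|` [set o]) = 0%E by apply/le_anti/andP; split.
  move: ha; case: (u (R:=R) (w t) 0 Cset) => [r||] //=.
  - rewrite /ediff /= lee_fin => ha; rewrite -EFinB lee_fin; lra.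
  - by rewrite /ediff /= leey.
have -> : (2%:E = \int[P]_t (cst 2%:E) t)%E.
  rewrite integral_cst // [X in _ = (_ * X)%E](_ : _ = 1%E) ?mule1 //.
  exact: probability_setT.
apply: int_mono => // t; by rewrite /= lee_fin.
Qed.
End fin2.

Unset Implicit Arguments.

Theorem lemma2p3 (R : realType) (d : measure_display) (T : measurableType d)
  (P : probability T R) (p : R) (w : T -> site -> bool)
  (A B : set site) (n : nat) :
  0 <= p <= 1 ->
  bernoulli_field P p w ->
  A `<=` Cset -> B `<=` A -> infinite_set A -> infinite_set B ->
  ((\int[P]_t ediff (u (w t) n (B `|` [set o])) (u (w t) n B)
    >= \int[P]_t ediff (u (w t) n (A `|` [set o])) (u (w t) n A))
   /\ (\int[P]_t ediff (u (w t) n (A `|` [set o])) (u (w t) n A)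
    >= (2 * p)%:E))%E.
Proof.
move=> hp hB hAC hBA _ _.
have hBC : B `<=` Cset by move=> z /hBA /hAC.
split.
  apply: (@int_mono R d T P (dif R w n A) (dif R w n B)) => t.
    exact: dif_ge0.
  exact: dif_mono.
have hCA : (\int[P]_t dif R w n Cset t <= \int[P]_t dif R w n A t)%E.
  apply: int_mono => t; first exact: dif_ge0.
  exact: dif_mono.
apply: le_trans hCA.
case: n => [|n'].
  apply: le_trans (final_n0 P w); rewrite lee_fin; move/andP: hp => [_ hp1]; lra.
move/andP: hp => [hp0 hp1].
case: (eqVneq p 0) => [->|hpn0].
  by rewrite mulr0; apply: integral_ge0 => t _; exact: dif_ge0.
apply: (final_C hB) => //; apply/andP; split => //; rewrite lt_neqAle eq_sym hpn0.
exact: hp0.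
Qed.
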